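(* For $m,n\ge2$, \[ \sum_{k=2}^m\sum_{l=2}^n\frac{(-1)^{k+l}G_{k,l}}{m-k+n-l+1}=\frac{1}{m+n-1}-\frac{1}{mn}. \]
   Context: The generalized Gregory coefficients $G_{m,n}$ are defined by $\sum_{m,n\ge0}G_{m,n}x^my^n=\dfrac{y\log^2(1+x)-x\log^2(1+y)}{\log(1+x)-\log(1+y)}$ (formal power series; $\log^ku=(\log u)^k$). *)

(* Defs.v *)
(* Bivariate formal power series over rat are represented by
   their coefficient functions nat -> nat -> rat (coefficient of x^i y^j). *)
From mathcomp Require Import all_boot all_order all_algebra.
Set Implicit Arguments. Unset Strict Implicit. Unset Printing Implicit Defensive.
Import Order.TTheory GRing.Theory Num.Theory.
Local Open Scope ring_scope.

(* coefficient of u^k in log(1+u) = sum_{k>=1} (-1)^(k+1) u^k / k *)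
Definition logc (k : nat) : rat :=
  if k is 0%N then 0 else (-1) ^+ k.+1 / k%:R.

(* coefficient of u^k in log^2(1+u) *)
Definition logsq (k : nat) : rat := \sum_(i < k.+1) logc i * logc (k - i).

(* coefficient of x^i y^j in  y log^2(1+x) - x log^2(1+y) *)
Definition gnumer (i j : nat) : rat :=
  (j == 1%N)%:R * logsq i - (i == 1%N)%:R * logsq j.

(* coefficient of x^i y^j in  log(1+x) - log(1+y) *)
Definition gdenom (i j : nat) : rat :=
  (j == 0%N)%:R * logc i - (i == 0%N)%:R * logc j.

(* G is the coefficient family of the quotient series: G(x,y) * denom = numer
   as formal power series (Cauchy product of coefficients). Since Q[[x,y]] is an
   integral domain, this characterizes the generalized Gregory coefficients. *)
Definition is_gen_gregory (G : nat -> nat -> rat) : Prop :=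
  forall i j : nat,
    \sum_(a < i.+1) \sum_(b < j.+1) G a b * gdenom (i - a) (j - b) = gnumer i j.

(* Main.v *)
Require Import Defs.
From mathcomp Require Import all_boot all_order all_algebra.
From mathcomp Require Import ring zify.
Import Order.TTheory GRing.Theory Num.Theory.
Local Open Scope ring_scope.

Arguments logc : simpl never.

Lemma logc0 : logc 0 = 0. Proof. by []. Qed.
Lemma logcS k : logc k.+1 = (-1) ^+ k / k.+1%:R.
Proof. by rewrite /logc !exprS !mulN1r opprK. Qed.
Lemma logc1 : logc 1 = 1.
Proof. by rewrite logcS expr0 divr1. Qed.

Lemma logsq0 : logsq 0 = 0.
Proof. by rewrite /logsq big_ord1 logc0 mul0r. Qed.
Lemma logsq1 : logsq 1 = 0.
Proof. by rewrite /logsq !big_ord_recr big_ord0 /= mul0r mulr0 !addr0. Qed.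

Section S.
Variable G : nat -> nat -> rat.
Hypothesis HG : is_gen_gregory G.

Lemma sum2 (F : nat -> rat) a :
  \sum_(0 <= c < a.+2) F c = \sum_(0 <= c < a) F c + F a + F a.+1.
Proof. by rewrite !big_nat_recr. Qed.

Lemma sum1 (F : nat -> rat) a :
  \sum_(0 <= c < a.+1) F c = \sum_(0 <= c < a) F c + F a.
Proof. by rewrite big_nat_recr. Qed.

Lemma conv_uniq (f g : nat -> rat) :
  (forall a, \sum_(0 <= c < a.+2) f c * logc (a.+1 - c)
           = \sum_(0 <= c < a.+2) g c * logc (a.+1 - c)) -> forall a, f a = g a.
Proof.
move=> H.
have K : forall a c, (c <= a)%N -> f c = g c.
  elim=> [|a IH] c hc.
    have := H 0%N; rewrite !big_nat_recr // !big_geq // !subnn !subn0 logc0 logc1.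
    by rewrite !mulr0 !mulr1 /= !add0r !addr0; move: hc; rewrite leqn0 => /eqP ->.
  case: (ltnP c a.+1) => hca; first exact: IH.
  have -> : c = a.+1 by apply/eqP; rewrite eqn_leq hc hca.
  have := H a.+1; rewrite !sum2 !subnn subSnn logc0 logc1 !mulr0 !mulr1 !addr0.
  rewrite (eq_big_nat _ _ (F2 := fun c => g c * logc (a.+2 - c))); last first.
    by move=> i /andP [_ hi]; rewrite IH // ltnW.
  by move/addrI.
by move=> a; apply: (K a).
Qed.

Lemma Dsplit i j :
  \sum_(0 <= a < i.+1) G a j * logc (i - a) - \sum_(0 <= b < j.+1) G i b * logc (j - b)
  = gnumer i j.
Proof.
rewrite -HG.
rewrite (eq_bigr (fun a : 'I_i.+1 => \sum_(0 <= b < j.+1) G a b * gdenom (i - a) (j - b)));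
  last by move=> a _; rewrite big_mkord.
rewrite -(big_mkord xpredT (fun a => \sum_(0 <= b < j.+1) G a b * gdenom (i - a) (j - b))).
rewrite /gdenom.
rewrite [RHS](eq_bigr (fun a => \sum_(0 <= b < j.+1) G a b * ((j - b == 0)%N%:R * logc (i - a))
     - \sum_(0 <= b < j.+1) G a b * ((i - a == 0)%N%:R * logc (j - b)))); last first.
  by move=> a _; rewrite -sumrB; apply: eq_bigr => b _; rewrite mulrBr.
rewrite [RHS]sumrB; congr (_ - _).
  apply: eq_bigr => a _; rewrite sum1 subnn eqxx /= mul1r big1_seq ?add0r //.
  move=> b /andP [_]; rewrite mem_index_iota => /andP [_ hb].
  have -> : (j - b == 0)%N = false by apply/negbTE; rewrite subn_eq0 -ltnNge.
  by rewrite /= mul0r mulr0.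
rewrite [RHS]sum1 subnn eqxx /=.
rewrite [X in _ = X + _]big1_seq ?add0r; last first.
  move=> a /andP [_]; rewrite mem_index_iota => /andP [_ ha].
  have -> : (i - a == 0)%N = false by apply/negbTE; rewrite subn_eq0 -ltnNge.
  by rewrite big1 // => b _; rewrite /= mul0r mulr0.
by apply: eq_bigr => b _; rewrite mul1r.
Qed.

Lemma G_0 a : G a 0 = 0.
Proof.
apply: (conv_uniq (fun a => G a 0) (fun _ => 0)) => {}a.
have := Dsplit a.+1 0; rewrite big_nat1 subn0 logc0 mulr0 subr0 => ->.
rewrite /gnumer logsq0 /= mul0r mulr0 subrr.
by rewrite big1 // => c _; rewrite mul0r.
Qed.

Lemma G0_ b : G 0 b = 0.
Proof.
apply: (conv_uniq (fun b => G 0 b) (fun _ => 0)) => {}b.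
have := Dsplit 0 b.+1; rewrite big_nat1 subn0 logc0 mulr0 sub0r => /eqP.
rewrite eqr_oppLR => /eqP ->.
rewrite /gnumer logsq0 /= mul0r mulr0 subrr oppr0.
by rewrite big1 // => c _; rewrite mul0r.
Qed.

Lemma G_1 a : G a 1 = logc a.
Proof.
apply: (conv_uniq (fun a => G a 1) logc) => {}a.
have := Dsplit a.+1 1.
rewrite (sum2 (fun b => G a.+1 b * logc (1 - b)) 0) (big_geq (m:=0) (n:=0)) // G_0 subnn logc0 mulr0 mul0r.
rewrite ?add0r ?addr0 ?subr0 => ->.
rewrite /gnumer logsq1 mulr0 subr0 eqxx /= mul1r.
by rewrite /logsq -(big_mkord xpredT (fun i => logc i * logc (a.+1 - i))).
Qed.

Lemma G1_ b : G 1 b = logc b.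
Proof.
apply: (conv_uniq (fun b => G 1 b) logc) => {}b.
have := Dsplit 1 b.+1.
rewrite (sum2 (fun a => G a b.+1 * logc (1 - a)) 0) (big_geq (m:=0) (n:=0)) // G0_ subnn logc0 mulr0 mul0r.
rewrite ?add0r ?addr0 ?sub0r => /eqP; rewrite eqr_oppLR => /eqP ->.
rewrite /gnumer logsq1 mulr0 sub0r eqxx /= mul1r opprK.
by rewrite /logsq -(big_mkord xpredT (fun i => logc i * logc (b.+1 - i))).
Qed.

Definition S (p q : nat) : rat :=
  \sum_(2 <= a < p.+1) \sum_(2 <= b < q.+1) G a b * logc (p - a + (q - b)).+1.

Lemma sum_recr (F : nat -> rat) m n : (m <= n)%N ->
  \sum_(m <= c < n.+1) F c = \sum_(m <= c < n) F c + F n.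
Proof. by move=> h; rewrite big_nat_recr. Qed.

Lemma sumsplit (F : nat -> rat) n : (1 < n)%N ->
  \sum_(0 <= c < n.+1) F c = F 0%N + F 1%N + \sum_(2 <= c < n) F c + F n.
Proof.
by move=> h; rewrite sum_recr // big_ltn ?(ltn_trans _ h) // big_ltn // addrA.
Qed.

Lemma lemA i j : (1 <= i)%N -> (1 <= j)%N ->
  S i j.+1 - S i.+1 j = logc i.+1 * logc j - logc i * logc j.+1.
Proof.
move=> hi hj.
have g0 : gnumer i.+1 j.+1 = 0.
  rewrite /gnumer; have -> : (j.+1 == 1)%N = false by case: j hj.
  have -> : (i.+1 == 1)%N = false by case: i hi.
  by rewrite !mulr0n !mul0r subrr.
have E := Dsplit i.+1 j.+1; rewrite g0 in E.
rewrite !sumsplit // in E.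
rewrite !subnn logc0 !mulr0 !addr0 G0_ G_0 in E.
rewrite !mul0r !add0r G_1 G1_ !subSS !subn0 in E.
rewrite /S (sum_recr _ 2 i.+1) //.
rewrite (eq_bigr (fun a => \sum_(2 <= b < j.+1) G a b * logc (i - a + (j.+1 - b)).+1
    + G a j.+1 * logc (i - a + (j.+1 - j.+1)).+1)); last by move=> a _; rewrite sum_recr.
rewrite big_split.
have X1 : \sum_(2 <= a < i.+1) G a j.+1 * logc (i - a + (j.+1 - j.+1)).+1
     = \sum_(2 <= a < i.+1) G a j.+1 * logc (i.+1 - a).
  by apply: eq_big_nat => a /andP [_ ha]; rewrite subnn addn0 subSn.
have X2 : \sum_(2 <= b < j.+1) G i.+1 b * logc (i.+1 - i.+1 + (j - b)).+1
     = \sum_(2 <= b < j.+1) G i.+1 b * logc (j.+1 - b).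
  by apply: eq_big_nat => b /andP [_ hb]; rewrite subnn add0n subSn.
have X3 : \sum_(2 <= a < i.+1) \sum_(2 <= b < j.+1) G a b * logc (i - a + (j.+1 - b)).+1
   = \sum_(2 <= a < i.+1) \sum_(2 <= b < j.+1) G a b * logc (i.+1 - a + (j - b)).+1.
  apply: eq_big_nat => a /andP [_ ha]; apply: eq_big_nat => b /andP [_ hb].
  by congr (_ * logc _); lia.
rewrite X1 X2 X3.
move/eqP: E; rewrite subr_eq0 => /eqP E.
have -> : \sum_(2 <= a < i.+1) G a j.+1 * logc (i.+1 - a)
  = logc i.+1 * logc j + \sum_(2 <= c < j.+1) G i.+1 c * logc (j.+1 - c) - logc j.+1 * logc i.
  by rewrite -E addrC addKr.
rewrite /=.
move: (\sum_(2 <= a < i.+1) \sum_(2 <= b < j.+1) G a b * logc (i.+1 - a + (j - b)).+1) => C.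
move: (\sum_(2 <= c < j.+1) G i.+1 c * logc (j.+1 - c)) => B.
move: (logc i.+1) (logc j) (logc i) (logc j.+1) => x y z w.
ring.
Qed.

Lemma closed n : forall m, (1 <= m)%N ->
  S m n.+1 = logc (m + n) - logc m * logc n.+1.
Proof.
elim: n => [|n IH] m hm.
  by rewrite /S big1 ?addn0 ?logc1 ?mulr1 ?subrr // => a _; rewrite big_geq.
have := @lemA m n.+1 hm isT.
rewrite IH // => /eqP; rewrite subr_eq => /eqP ->.
rewrite addSn addnS.
move: (logc m.+1 * logc n.+1) (logc (m + n).+1) (logc m * logc n.+2) => u a b.
ring.
Qed.

End S.

Theorem theorem5p6 (G : nat -> nat -> rat) (HG : is_gen_gregory G)
  (m n : nat) (hm : (2 <= m)%N) (hn : (2 <= n)%N) :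
  \sum_(2 <= k < m.+1) \sum_(2 <= l < n.+1)
     (-1) ^+ (k + l) * G k l / (m - k + n - l + 1)%:R
  = 1 / (m + n - 1)%:R - 1 / (m * n)%:R.
Proof.
have -> : \sum_(2 <= k < m.+1) \sum_(2 <= l < n.+1)
     (-1) ^+ (k + l) * G k l / (m - k + n - l + 1)%:R = (-1) ^+ (m + n) * S G m n.
  rewrite /S mulr_sumr; apply: eq_big_nat => k /andP [_ hk].
  rewrite mulr_sumr; apply: eq_big_nat => l /andP [_ hl].
  rewrite logcS.
  have -> : (m - k + n - l + 1 = (m - k + (n - l)).+1)%N by lia.
  have -> : (m + n = (m - k + (n - l)) + (k + l))%N by lia.
  rewrite (exprD _ (m - k + (n - l)) (k + l)) -(@signr_odd _ (k + l)) -(@signr_odd _ (m - k + (n - l))).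
  move: (G k l) ((m - k + (n - l)).+1%:R) => g N.
  case: (odd _); case: (odd _); rewrite /= ?expr0 ?expr1; ring.
case: n hn => [|[|n]] // _.
rewrite (@closed G HG) ?(leq_trans _ hm) //.
case: m hm => [|[|m]] // _.
have e1 : (m.+2 + n.+1 = (m + n + 2).+1)%N by lia.
have e2 : (m.+2 + n.+2 - 1 = (m + n + 2).+1)%N by lia.
have e3 : (m.+2 + n.+2 = m + n + 4)%N by lia.
rewrite e1 e2 e3 !logcS natrM.
rewrite !exprD !exprS -(@signr_odd _ m) -(@signr_odd _ n).
have h1 : ((m + n + 2).+1)%:R != 0 :> rat by rewrite pnatr_eq0.
have h2 : (m.+2)%:R != 0 :> rat by rewrite pnatr_eq0.
have h3 : (n.+2)%:R != 0 :> rat by rewrite pnatr_eq0.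
move: h1 h2 h3; move: ((m + n + 2).+1%:R) (m.+2%:R) (n.+2%:R) => X Y Z h1 h2 h3.
case: (odd m); case: (odd n); rewrite /= ?expr0 ?expr1; field; by rewrite ?h1 ?h2 ?h3 ?mulf_neq0.
Qed.
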